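(* For $n\in\mathbb{N}$, let $K_n^0$ be the complete graph on $\{0,1,\dots,n\}$ rooted at $0$. Then $\mathrm{PPF}_n=\mathrm{PPF}(K_n^0)$. Consequently $|\mathrm{PPF}(K_n^0)|=|\mathrm{SR}(K_n^0)|=(n-1)^{n-1}$.
   Context: $[n]=\{1,\dots,n\}$. A classical parking function of size $n$ is $p=(p_1,\dots,p_n)\in[n]^n$ with $|\{j: p_j\le i\}|\ge i$ for all $i\in[n]$; $\mathrm{PF}_n$ is their set. $p\in\mathrm{PF}_n$ has a breakpoint at $j\in[n]$ if $|\{i\in[n]:p_i\le j\}|=j$; $p$ is prime if its only breakpoint is $j=n$; $\mathrm{PPF}_n$ is the set of prime parking functions of size $n$. Functions on $[n]$ are identified with tuples. For a rooted graph $G=(\Gamma,s)$ (finite, undirected, loopless multigraph with sink $s$), $V$ is the vertex set, $\tilde V=V\setminus\{s\}$, $\mathrm{mult}(vw)$ the number of edges between $v,w$, $\deg^A(v)=\sum_{w\in A}\mathrm{mult}(vw)$, $\deg(v)=\deg^V(v)$. A $G$-parking function is $p:\tilde V\to\{1,2,\dots\}$ such that every nonempty $S\subseteq\tilde V$ contains $v$ with $p(v)\le\deg^{V\setminus S}(v)$. With $G^A$ the induced subgraph on $A\cup\{s\}$ rooted at $s$, $p$ is decomposable w.r.t. an ordered partition $(A,B)$ of $\tilde V$ into nonempty blocks if $p|_A$ is a $G^A$-parking function and $v\mapsto p(v)-\deg^A(v)$ on $B$ is a $G^B$-parking function; $p$ is prime if decomposable w.r.t. no such partition; $\mathrm{PPF}(G)$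 is the set of prime $G$-parking functions. A configuration $c:\tilde V\to\mathbb{Z}$ is stable if $c(v)<\deg(v)$ for all $v$; a stable $c$ is recurrent if there is no nonempty $F\subseteq\tilde V$ with $c(v)<\deg^F(v)$ for all $v\in F$; with $V_M(c)=\{v: c(v)\ge\deg(v)-\mathrm{mult}(vs)\}$ and $c^{v-}=c-\sum_{w\ne v}\mathrm{mult}(ws)\mathbf 1_w$, a recurrent $c$ is strongly recurrent if $c^{v-}$ is recurrent for all $v\in V_M(c)$; $\mathrm{SR}(G)$ is their set. *)

(* Defs.v *)
From mathcomp Require Import all_boot all_order all_algebra.
Set Implicit Arguments. Unset Strict Implicit. Unset Printing Implicit Defensive.
Import Order.TTheory GRing.Theory Num.Theory.

(* p = (p_1,...,p_n) is an n.-tuple of naturals; p_{i+1} = tnth p i. *)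

Definition is_PF (n : nat) (p : n.-tuple nat) : Prop :=
  (forall j : 'I_n, 1 <= tnth p j <= n) /\
  (forall i : nat, 1 <= i <= n -> i <= #|[set j : 'I_n | tnth p j <= i]|).

Definition breakpoint (n : nat) (p : n.-tuple nat) (j : nat) : Prop :=
  1 <= j <= n /\ #|[set i : 'I_n | tnth p i <= j]| = j.

Definition is_PPF (n : nat) (p : n.-tuple nat) : Prop :=
  is_PF p /\ (forall j, breakpoint p j -> j = n).

(* A rooted graph is given by a finite vertex type V, a multiplicity
   function m : V -> V -> nat (m v w = number of edges between v and w)
   and a sink s.  Functions on V~ = V \ {s} are represented as functions
   V -> int whose value at s is ignored. *)

Section Graphs.
Variables (V : finType) (m : V -> V -> nat) (s : V).

Definition deg_in (A : {set V}) (v : V) : nat := \sum_(w in A) m v w.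
Definition deg (v : V) : nat := deg_in [set: V] v.
Definition Vt : {set V} := [set v | v != s].

(* p restricted to A (A a subset of V~) is a G^A-parking function,
   where G^A is the induced subgraph on A \cup {s} rooted at s. *)
Definition is_GPF_on (A : {set V}) (p : V -> int) : Prop :=
  (forall v, v \in A -> (1 <= p v)%R) /\
  (forall S : {set V}, S \subset A -> S != set0 ->
     exists2 v, v \in S & (p v <= (deg_in ((A :|: [set s]) :\: S) v)%:Z)%R).

Definition is_GPF (p : V -> int) : Prop := is_GPF_on Vt p.

Definition decomposable (p : V -> int) (A B : {set V}) : Prop :=
  is_GPF_on A p /\ is_GPF_on B (fun v => p v - (deg_in A v)%:Z)%R.

Definition ordered_partition (A B : {set V}) : Prop :=
  A :|: B = Vt /\ A :&: B = set0 /\ A != set0 /\ B != set0.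

Definition is_prime_GPF (p : V -> int) : Prop :=
  is_GPF p /\
  (forall A B : {set V}, ordered_partition A B -> ~ decomposable p A B).

Definition stable (c : V -> int) : Prop :=
  forall v, v \in Vt -> (c v < (deg v)%:Z)%R.

Definition recurrent (c : V -> int) : Prop :=
  stable c /\
  ~ (exists F : {set V}, [/\ F \subset Vt, F != set0 &
        forall v, v \in F -> (c v < (deg_in F v)%:Z)%R]).

Definition VM (c : V -> int) : {set V} :=
  [set v in Vt | ((deg v)%:Z - (m v s)%:Z <= c v)%R].

Definition cminus (c : V -> int) (v : V) : V -> int :=
  fun u => (c u - (if u != v then Posz (m u s) else 0))%R.

Definition strongly_recurrent (c : V -> int) : Prop :=
  recurrent c /\ (forall v, v \in VM c -> recurrent (cminus c v)).

End Graphs.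

Definition Kmult (n : nat) (v w : 'I_n.+1) : nat := (v != w).

(* Identification of an n-tuple with a function on V~ = {1,...,n}:
   vertex i+1 (i : 'I_n) gets the i-th coordinate. *)
Definition tup_fun (n : nat) (p : n.-tuple nat) : 'I_n.+1 -> int :=
  fun v => match unlift ord0 v with Some i => Posz (tnth p i) | None => 0%R end.

Definition tupZ_fun (n : nat) (c : n.-tuple int) : 'I_n.+1 -> int :=
  fun v => match unlift ord0 v with Some i => tnth c i | None => 0%R end.

Definition in_PPF_K (n : nat) (p : n.-tuple nat) : Prop :=
  is_prime_GPF (@Kmult n) ord0 (tup_fun p).

Definition in_SR_K (n : nat) (c : n.-tuple int) : Prop :=
  strongly_recurrent (@Kmult n) ord0 (tupZ_fun c).

(* Main.v *)
Require Import Defs.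
From mathcomp Require Import all_boot all_order all_algebra.
From mathcomp Require Import zify.
From Stdlib Require Import FunctionalExtensionality.
Set Implicit Arguments. Unset Strict Implicit. Unset Printing Implicit Defensive.
Import Order.TTheory GRing.Theory Num.Theory.

Section Count.
Variable m : nat.
Local Notation N := m.+1.
Local Notation n := m.+2.
Local Notation FT := {ffun 'I_n -> 'I_N}.

Definition shv (r a : nat) : nat := if r <= a then a - r else a + N - r.
Definition addv (r a : nat) : nat := if a + r < N then a + r else a + r - N.

Lemma shv_lt (r : 'I_N) (a : 'I_N) : shv r a < N.
Proof. rewrite /shv; case: ifP => H; have := ltn_ord a; have := ltn_ord r; lia. Qed.
Lemma addv_lt (r : 'I_N) (a : 'I_N) : addv r a < N.
Proof. rewrite /addv; case: ifP => H; have := ltn_ord a; have := ltn_ord r; lia. Qed.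

Definition sh (r : 'I_N) (x : FT) : FT := [ffun i => Ordinal (shv_lt r (x i))].
Definition ush (r : 'I_N) (x : FT) : FT := [ffun i => Ordinal (addv_lt r (x i))].

Lemma sh_ush r x : sh r (ush r x) = x.
Proof.
apply/ffunP => i; apply/val_inj; rewrite !ffunE /= /shv /addv.
have := ltn_ord (x i); have := ltn_ord r => h1 h2.
case: (ltnP (x i + r) N) => H1; case: leqP => H2; lia.
Qed.

Lemma sh_inj r : injective (sh r).
Proof.
move=> x y /ffunP H; apply/ffunP => i; have := H i; rewrite !ffunE => /(congr1 val) /=.
rewrite /shv; have := ltn_ord (x i); have := ltn_ord (y i); have := ltn_ord r.
move=> h1 h2 h3 E; apply/val_inj => /=; move: E.
case: leqP => H1; case: leqP => H2; lia.
Qed.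

Definition C (x : FT) (a : nat) : nat := \sum_i (x i < a : nat).

Lemma C0 x : C x 0 = 0.
Proof. by rewrite /C big1 // => i _; rewrite ltn0. Qed.

Lemma CN x a : N <= a -> C x a = n.
Proof.
move=> Ha; rewrite /C (eq_bigr (fun _ => 1)); last first.
  by move=> i _; rewrite (leq_trans (ltn_ord (x i)) Ha).
by rewrite sum1_card card_ord.
Qed.

Lemma C_le x a : C x a <= n.
Proof.
have -> : n = \sum_(i : 'I_n) 1 by rewrite sum1_card card_ord.
rewrite /C; apply: leq_sum => i _; by case: (_ < _).
Qed.

Lemma Csh_a x (r : 'I_N) t : r + t <= N -> C (sh r x) t + C x r = C x (r + t).
Proof.
move=> Hrt; rewrite /C -big_split /=; apply: eq_bigr => i _.
rewrite ffunE /= /shv; move: (x i) (ltn_ord (x i)) (ltn_ord r) => a Ha Hr.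
case: (leqP r a) => H1.
  case: (ltnP (a - r) t) => H2; case: (ltnP a (r + t)) => H3 //=; lia.
case: (ltnP (a + N - r) t) => H2; case: (ltnP a (r + t)) => H3 //=; lia.
Qed.

Lemma Csh_b x (r : 'I_N) t : N < r + t -> t <= N ->
  C (sh r x) t + C x r = n + C x (r + t - N).
Proof.
move=> Hrt HtN; have -> : n = \sum_(i : 'I_n) 1.
  by rewrite sum1_card card_ord.
rewrite /C -!big_split /=.
apply: eq_bigr => i _.
rewrite ffunE /= /shv; move: (x i) (ltn_ord (x i)) (ltn_ord r) => a Ha Hr.
case: (leqP r a) => H1.
  case: (ltnP (a - r) t) => H2; case: (ltnP a (r + t - N)) => H3 //=; lia.
case: (ltnP (a + N - r) t) => H2; case: (ltnP a (r + t - N)) => H3 //=; lia.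
Qed.


Definition primeb (x : FT) := [forall t : 'I_N, (0 < t) ==> (t < C x t)].
Definition lastmin (x : FT) (r : 'I_N) := forall j : 'I_N,
  (j < r -> C x r + j <= C x j + r) /\ (r < j -> C x r + j < C x j + r).

Lemma prime_sh x r : primeb (sh r x) <-> lastmin x r.
Proof.
have HCr := C_le x r.
split.
  move=> /forallP H j; split => Hj.
    have Hr := ltn_ord r; have Hjj := ltn_ord j.
    case: (posnP j) => j0.
      have Ht : N - r < N by lia.
      have := implyP (H (Ordinal Ht)) => /=.
      have -> : 0 < N - r by lia.
      move=> /(_ isT).
      rewrite -(leq_add2r (C x r)) Csh_a; last lia.
      rewrite (_ : r + (N - r) = N); last lia.
      rewrite (CN x (leqnn N)).
      have -> : C x j = 0 by rewrite /C big1 // => i _; rewrite j0 ltn0.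
      lia.
    have Ht : j + N - r < N by have := ltn_ord j; lia.
    have := implyP (H (Ordinal Ht)) => /=.
    have -> : 0 < j + N - r by have := ltn_ord r; lia.
    move=> /(_ isT).
    rewrite -(leq_add2r (C x r)) Csh_b; try (have := ltn_ord r; have := ltn_ord j; lia).
    have -> : r + (j + N - r) - N = j by have := ltn_ord r; lia.
    lia.
  have Ht2 : j - r < N by have := ltn_ord j; lia.
  have := implyP (H (Ordinal Ht2)) => /=.
  have -> : 0 < j - r by lia.
  move=> /(_ isT).
  rewrite -(leq_add2r (C x r)) Csh_a; try (have := ltn_ord j; lia).
  have -> : r + (j - r) = j by lia.
  lia.
move=> H; apply/forallP => t; apply/implyP => Ht0.
have Htr := ltn_ord t; have Hr0 := ltn_ord r.
case: (leqP (r + t) N) => Hrt.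
  rewrite -(leq_add2r (C x r)) Csh_a //.
  case: (ltnP (r + t) N) => Hrt'.
    have := (H (Ordinal Hrt')).2 => /=; lia.
  have r0 : 0 < r by lia.
  have := (H ord0).1 r0; rewrite C0 (CN x Hrt') /=; lia.
rewrite -(leq_add2r (C x r)) Csh_b //; last lia.
have Hj : r + t - N < N by lia.
have := (H (Ordinal Hj)).1 => /=; lia.
Qed.

Lemma lastmin_uniq x r r' : lastmin x r -> lastmin x r' -> r = r'.
Proof.
move=> H H'; apply/val_inj/eqP; rewrite eqn_leq.
case: (ltngtP r r') => // Hlt.
  have := (H r').2 Hlt; have := (H' r).1 Hlt; lia.
have := (H r').1 Hlt; have := (H' r).2 Hlt; lia.
Qed.

Definition key (x : FT) (j : 'I_N) := (C x j + N - j) * N + (N - 1 - j).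
Definition rr (x : FT) : 'I_N := [arg min_(j < ord0) key x j].

Lemma lastmin_rr x : lastmin x (rr x).
Proof.
rewrite /rr; case: arg_minnP => // r _ Hmin j.
have := Hmin j isT; rewrite /key.
have := ltn_ord j; have := ltn_ord r => h1 h2 Hk.
split => Hj; nia.
Qed.


Lemma card_prime : #|[set x : FT | primeb x]| = N ^ N.
Proof.
pose F (x : FT) := (rr x, sh (rr x) x).
have Finj : injective F.
  move=> x y [E1 E2]; move: E2; rewrite E1; exact: sh_inj.
have Him : F @: [set: FT] = setX [set: 'I_N] [set x : FT | primeb x].
  apply/setP => -[k p]; rewrite !inE /=; apply/imsetP/idP.
    by case=> x _ [_ ->]; apply/(prime_sh x (rr x)); exact: lastmin_rr.
  move=> Hp.
  have Hk : lastmin (ush k p) k by apply/prime_sh; rewrite sh_ush.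
  have E : rr (ush k p) = k := lastmin_uniq (lastmin_rr _) Hk.
  exists (ush k p); first by rewrite inE.
  by rewrite /F E sh_ush.
have := card_imset [set: FT] Finj; rewrite Him cardsX !cardsT card_ffun !card_ord.
rewrite expnS => /eqP; rewrite eqn_mul2l /= => /eqP <-; done.
Qed.

End Count.

Section K.
Variable n : nat.
Local Notation V := 'I_n.+1.
Local Notation m := (@Kmult n).
Local Notation s := (ord0 : V).
Local Notation VT := (Vt (ord0 : V)).

Definition PFon (A : {set V}) (g : V -> int) :=
  (forall v, v \in A -> (1 <= g v)%R) /\
  (forall k : nat, 0 < k <= #|A| -> k <= #|[set v in A | (g v <= k%:Z)%R]|).

Lemma deg_inK (X : {set V}) v : deg_in m X v = #|X :\ v|.
Proof.
rewrite /deg_in -sum1_card [RHS]big_mkcond [LHS]big_mkcond /=.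
apply: eq_bigr => w _; rewrite !inE /Kmult eq_sym.
by case: (w \in X); case: (w != v).
Qed.

Lemma VT_card : #|VT| = n.
Proof.
have -> : VT = [set~ s] by apply/setP => v; rewrite !inE.
by rewrite cardsC1 card_ord.
Qed.

Lemma s_notin (A : {set V}) : A \subset VT -> s \notin A.
Proof. by move=> /subsetP H; apply/negP => /H; rewrite inE eqxx. Qed.

Lemma deg_compl (A S : {set V}) v : A \subset VT -> S \subset A -> v \in S ->
  deg_in m ((A :|: [set s]) :\: S) v = #|A| + 1 - #|S|.
Proof.
move=> AV SA vS.
have vn : v \notin (A :|: [set s]) :\: S by rewrite inE vS.
rewrite deg_inK.
have := cardsD1 v ((A :|: [set s]) :\: S); rewrite (negbTE vn) add0n => <-.
rewrite cardsD setUC cardsU1 (s_notin AV).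
have -> : (s |: A) :&: S = S.
  by apply/setIidPr; apply: (subset_trans SA); apply/subsetP => w wA; rewrite !inE wA orbT.
by rewrite add1n addn1.
Qed.

Lemma GPF_onE (A : {set V}) g : A \subset VT -> is_GPF_on m s A g <-> PFon A g.
Proof.
move=> AV; split.
  case=> Hpos HS; split => // k /andP[k0 kA].
  rewrite leqNgt; apply/negP => Hlt.
  set L := [set v in A | (g v <= k%:Z)%R] in Hlt.
  have LA : L \subset A by apply/subsetP => v; rewrite inE => /andP[].
  have cS : #|A :\: L| = #|A| - #|L| by rewrite cardsD (setIidPr LA).
  have S0 : A :\: L != set0.
    by rewrite -card_gt0 cS; lia.
  have [v vS Hv] := HS _ (subsetDl A L) S0.
  rewrite deg_compl // ?subsetDl // in Hv.
  move: vS; rewrite !inE => /andP[/negP vL vA]; apply: vL; rewrite vA /=.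
  apply: (le_trans Hv); rewrite lez_nat cS; lia.
case=> Hpos Hk; split => // S SA S0.
set k := #|A| + 1 - #|S|.
have cS0 : 0 < #|S| by rewrite card_gt0.
have cSA : #|S| <= #|A| by exact: subset_leq_card.
case: (pickP [pred v in S | (g v <= k%:Z)%R]) => [v /andP[vS Hv] | Hn].
  by exists v => //; rewrite deg_compl.
have := Hk k; rewrite /k; have -> : 0 < #|A| + 1 - #|S| <= #|A| by lia.
move=> /(_ isT).
set L := [set v in A | _].
have LA : L \subset A by apply/subsetP => v; rewrite inE => /andP[].
have SL : S \subset A :\: L.
  apply/subsetP => v vS; rewrite !inE (subsetP SA v vS) andbT.
  apply/negP => /andP[_ Hv]; have := Hn v; by rewrite /= vS Hv.
have := subset_leq_card SL; rewrite cardsD (setIidPr LA); move=> h1 h2; exfalso; move: h1 h2 cS0 cSA; set a := #|S|; set b := #|A|; set c := #|L|; lia.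
Qed.

Lemma PFon_ext (A : {set V}) f g : {in A, f =1 g} -> PFon A f -> PFon A g.
Proof.
move=> E [H1 H2]; split.
  by move=> v vA; rewrite -(E v vA); apply: H1.
move=> k Hk; have := H2 k Hk.
have -> : [set v in A | (f v <= k%:Z)%R] = [set v in A | (g v <= k%:Z)%R] => //.
apply/setP => v; rewrite !inE; case: (boolP (v \in A)) => //= vA; by rewrite (E v vA).
Qed.


Lemma setUDK' (T : finType) (A X : {set T}) : A \subset X -> A :|: X :\: A = X.
Proof.
move=> /subsetP AX; apply/setP => v; rewrite !inE.
by case: (boolP (v \in A)) => //= /AX ->.
Qed.

Definition cntV (g : V -> int) (k : nat) := #|[set v in VT | (g v <= k%:Z)%R]|.
Definition PPFV (g : V -> int) := PFon VT g /\ forall k, 0 < k < n -> k < cntV g k.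

Lemma decompE (A B : {set V}) g : ordered_partition s A B ->
  decomposable m s g A B <-> PFon A g /\ PFon B (fun v => g v - (#|A|)%:Z)%R.
Proof.
case=> UAB [IAB [A0 B0]].
have AV : A \subset VT by rewrite -UAB subsetUl.
have BV : B \subset VT by rewrite -UAB subsetUr.
have E : {in B, (fun v => g v - (deg_in m A v)%:Z)%R =1 (fun v => g v - (#|A|)%:Z)%R}.
  move=> v vB /=; rewrite deg_inK.
  have vA : v \notin A.
    apply/negP => vA; have : v \in A :&: B by rewrite inE vA vB.
    by rewrite IAB inE.
  by have := cardsD1 v A; rewrite (negbTE vA) add0n => ->.
rewrite /decomposable !GPF_onE //; split; case=> H1 H2; split => //.
  exact: PFon_ext H2.
apply: PFon_ext H2 => v vB; by rewrite E.
Qed.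

Lemma prime_iff g : is_prime_GPF m s g <-> PPFV g.
Proof.
rewrite /is_prime_GPF /is_GPF GPF_onE //; split.
  case=> HPF Hnd; split => // k /andP[k0 kn].
  have Hge : k <= cntV g k by apply: HPF.2; rewrite k0 VT_card ltnW.
  rewrite ltn_neqAle Hge andbT; apply/negP => /eqP Hk.
  set A := [set v in VT | (g v <= k%:Z)%R].
  set B := VT :\: A.
  have AV : A \subset VT by apply/subsetP => v; rewrite inE => /andP[].
  have cA : #|A| = k by rewrite Hk.
  have cB : #|B| = n - k by rewrite cardsD (setIidPr AV) cA VT_card.
  apply: (Hnd A B).
    split; first by exact: setUDK'.
    split; first by apply/setP => v; rewrite in_setI in_setD in_set0; case: (v \in A).
    by rewrite -!card_gt0 cA cB; split; lia.
  apply/decompE.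
    split; first by exact: setUDK'.
    split; first by apply/setP => v; rewrite in_setI in_setD in_set0; case: (v \in A).
    by rewrite -!card_gt0 cA cB; split; lia.
  rewrite cA; split; split.
  - by move=> v /(subsetP AV); apply: HPF.1.
  - move=> j /andP[j0 jk]; rewrite cA in jk.
    have -> : [set v in A | (g v <= j%:Z)%R] = [set v in VT | (g v <= j%:Z)%R].
      apply/setP => v; rewrite !inE; case: (v != ord0) => //=.
      case: (boolP (g v <= j%:Z)%R) => H; rewrite ?andbF ?andbT //.
      by apply: (le_trans H); rewrite lez_nat.
    by apply: HPF.2; rewrite j0 VT_card (leq_trans jk) // ltnW.
  - move=> v; rewrite !inE => /andP[/negP vA vV].
    have : ~~ (g v <= k%:Z)%R by apply/negP => H; apply: vA; rewrite vV.
    rewrite -ltNge => H; rewrite lerBrDr; move: H; lia.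
  - move=> j /andP[j0 jB]; rewrite cB in jB.
    have Hjk := HPF.2 (j + k); rewrite VT_card in Hjk.
    have := Hjk; rewrite /= (_ : 0 < j + k <= n) ?(leq_trans _ jB) //; last lia.
    move=> /(_ isT).
    set Y := [set v in VT | (g v <= (j + k)%:Z)%R].
    have AY : A \subset Y.
      apply/subsetP => v; rewrite !inE => /andP[-> H] /=; apply: (le_trans H).
      by rewrite lez_nat leq_addl.
    have -> : [set v in B | (g v - k%:Z <= j%:Z)%R] = Y :\: A.
      apply/setP => v; rewrite !inE.
      by rewrite lerBlDr PoszD -andbA.
    rewrite cardsD (setIidPr AY) cA; move: #|Y| => y; lia.
case=> HPF Hpr; split => // A B Hpart /(decompE g Hpart) [[PA1 PA2] [PB1 PB2]].
case: Hpart => UAB [IAB [A0 B0]].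
have AV : A \subset VT by rewrite -UAB subsetUl.
have cAB : #|A| + #|B| = n.
  by rewrite -[RHS]VT_card -UAB cardsU IAB cards0 subn0.
have cA0 : 0 < #|A| by rewrite card_gt0.
have cB0 : 0 < #|B| by rewrite card_gt0.
have := Hpr #|A|; rewrite cA0 /= (_ : #|A| < n); last by move: cAB cB0; set a := #|A|; set b := #|B|; lia.
move=> /(_ isT).
suff -> : cntV g #|A| = #|A| by rewrite ltnn.
have Hall : forall v, v \in A -> (g v <= (#|A|)%:Z)%R.
  have := PA2 #|A|; rewrite cA0 leqnn => /(_ isT) Hc.
  have : [set v in A | (g v <= (#|A|)%:Z)%R] == A.
    by rewrite eqEcard Hc andbT; apply/subsetP => v; rewrite inE => /andP[].
  move=> /eqP E v vA; move: vA; rewrite -{1}E inE => /andP[] //.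
rewrite /cntV -[in RHS](_ : [set v in VT | (g v <= (#|A|)%:Z)%R] = A) //; apply/setP => v; rewrite inE.
case: (boolP (v \in A)) => vA.
  by rewrite Hall // andbT (subsetP AV).
case: (boolP (v \in VT)) => //= vV.
have vB : v \in B by move: vV; rewrite -UAB inE (negbTE vA).
have := PB1 v vB; rewrite lerBrDr => H; apply/negbTE; rewrite -ltNge.
move: H; move: (g v) #|A| => z a; lia.
Qed.


Lemma deg_K v : deg m v = n.
Proof. by rewrite /deg deg_inK; have := cardsD1 v [set: V]; rewrite cardsT card_ord in_setT add1n => -[]. Qed.

Lemma recurrentE c : recurrent m s c <-> PFon VT (fun v => n%:Z - c v)%R.
Proof.
rewrite -GPF_onE // /recurrent /is_GPF_on /stable; split.
  case=> Hst Hno; split.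
    move=> v vV; have := Hst v vV; rewrite deg_K; move: (c v) => z; lia.
  move=> S SV S0.
  case: (pickP [pred v in S | (deg_in m S v)%:Z <= c v]%R) => [v /andP[vS Hv] | Hn].
    exists v => //; rewrite deg_compl // VT_card; move: Hv; rewrite deg_inK.
    have := cardsD1 v S; rewrite vS add1n.
    have := subset_leq_card SV; rewrite VT_card.
    move: (c v) #|S| #|S :\ v| => z a b; lia.
  exfalso; apply: Hno; exists S; split => // v vS.
  have := Hn v; rewrite /= vS /= => /negbT; rewrite -ltNge; done.
case=> Hpos HS; split.
  move=> v vV; have := Hpos v vV; rewrite deg_K; move: (c v) => z; lia.
case=> F [FV F0 HF].
have [v vF Hv] := HS F FV F0.
have := HF v vF; rewrite deg_inK; move: Hv; rewrite deg_compl // VT_card.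
have := cardsD1 v F; rewrite vF add1n.
have := subset_leq_card FV; rewrite VT_card.
move: (c v) #|F| #|F :\ v| => z a b; lia.
Qed.

Lemma VME c v : (v \in VM m s c) = (v \in VT) && (n%:Z - c v <= 1)%R.
Proof.
rewrite /VM !inE deg_K /Kmult; case: (v != ord0) => //=.
by move: (c v) => z; apply/idP/idP; lia.
Qed.

Lemma cminusE c v u : u \in VT ->
  (n%:Z - cminus m s c v u = (n%:Z - c u) + (u != v)%:Z)%R.
Proof.
rewrite inE /cminus /Kmult => ->; case: (u != v) => /=; move: (c u) => z; lia.
Qed.

Lemma cnt_shift (q : V -> int) v k : v \in VT -> (q v <= 1)%R -> 0 < k ->
  [set u in VT | (q u + (u != v)%:Z <= (k.+1)%:Z)%R] = [set u in VT | (q u <= k%:Z)%R].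
Proof.
move=> vV qv k0; apply/setP => u; rewrite !inE.
case: (u != ord0) => //=.
case: (eqVneq u v) => [-> | uv] /=.
  move: qv; move: (q v) => z qz; apply/idP/idP => _; lia.
move: (q u) => z; apply/idP/idP; lia.
Qed.

Lemma srE c : 0 < n -> strongly_recurrent m s c <-> PPFV (fun v => n%:Z - c v)%R.
Proof.
move=> n0; set q := (fun v => n%:Z - c v)%R.
have RE : forall v, recurrent m s (cminus m s c v) <->
    PFon VT (fun u => q u + (u != v)%:Z)%R.
  move=> v; rewrite recurrentE; split => H.
    by apply: PFon_ext H => u uV; rewrite cminusE.
  by apply: PFon_ext H => u uV; rewrite cminusE.
rewrite /strongly_recurrent recurrentE; split.
  case=> HPF HVM; split => // k /andP[k0 kn].
  have [v] : exists v, v \in [set u in VT | (q u <= 1%:Z)%R].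
    apply/set0Pn; rewrite -card_gt0; apply: (leq_trans _ (HPF.2 1 _)) => //.
    by rewrite VT_card.
  rewrite inE => /andP[vV qv].
  have := (proj1 (RE v) (HVM v _)).2 k.+1; rewrite VME vV qv => /(_ isT).
  rewrite VT_card (cnt_shift vV qv k0) => /(_ (kn)); done.
case=> HPF Hpr; split => // v; rewrite VME => /andP[vV qv].
apply/RE; split.
  move=> u uV; have := HPF.1 u uV; rewrite /q; case: (u != v) => /=; move: (c u) => z; lia.
move=> [|k] //; rewrite VT_card => /andP[_ kn].
case: k kn => [|k] kn.
  rewrite card_gt0; apply/set0Pn; exists v; rewrite !inE.
  move: vV; rewrite inE => ->; rewrite eqxx /= addr0; done.
rewrite (cnt_shift vV qv) //; exact: Hpr.
Qed.

End K.

Section Tup.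
Variable n : nat.

Definition cI (h : 'I_n -> int) (k : nat) := #|[set i | (h i <= k%:Z)%R]|.
Definition PPFI (h : 'I_n -> int) :=
  [/\ (forall i, 1 <= h i)%R, (forall k, 0 < k <= n -> k <= cI h k) &
      (forall k, 0 < k < n -> k < cI h k)].

Lemma cntV_I (g : 'I_n.+1 -> int) k : cntV g k = cI (fun i => g (lift ord0 i)) k.
Proof.
rewrite /cntV /cI.
have -> : [set v in Vt (ord0 : 'I_n.+1) | (g v <= k%:Z)%R] =
          lift ord0 @: [set i | (g (lift ord0 i) <= k%:Z)%R].
  apply/setP => v; rewrite !inE; apply/andP/imsetP.
    case=> v0 Hv; rewrite eq_sym in v0; have [j Ej _] := unlift_some v0.
    by exists j; rewrite // inE -Ej.
  by case=> j; rewrite inE => Hj ->; split => //; rewrite eq_sym neq_lift.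
by rewrite card_imset //; exact: lift_inj.
Qed.

Lemma PPFV_I (g : 'I_n.+1 -> int) : PPFV g <-> PPFI (fun i => g (lift ord0 i)).
Proof.
rewrite /PPFV /PFon VT_card; split.
  case=> -[H1 H2] H3; split.
  - by move=> i; apply: H1; rewrite inE eq_sym neq_lift.
  - by move=> k Hk; rewrite -cntV_I; apply: H2.
  - by move=> k Hk; rewrite -cntV_I; apply: H3.
case=> H1 H2 H3; split; first split.
- move=> v; rewrite inE eq_sym => v0; have [j -> _] := unlift_some v0; exact: H1.
- by move=> k Hk; have := H2 k Hk; rewrite -cntV_I.
- by move=> k Hk; have := H3 k Hk; rewrite -cntV_I.
Qed.

Lemma cI_setT (h : 'I_n -> int) k : n <= cI h k -> forall i, (h i <= k%:Z)%R.
Proof.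
move=> H i.
have : [set i | (h i <= k%:Z)%R] == [set: 'I_n].
  by rewrite eqEcard subsetT cardsT card_ord.
by move=> /eqP E; have := in_setT i; rewrite -E inE.
Qed.

Lemma cI_le (h : 'I_n -> int) k : cI h k <= n.
Proof. by rewrite /cI -[X in _ <= X]card_ord max_card. Qed.

Lemma is_PPF_I (p : n.-tuple nat) : 0 < n ->
  is_PPF p <-> PPFI (fun i => Posz (tnth p i)).
Proof.
move=> n0.
have cE : forall k, cI (fun i => Posz (tnth p i)) k = #|[set j | tnth p j <= k]|.
  by move=> k; rewrite /cI; congr (#|_|); apply/setP => j; rewrite !inE lez_nat.
rewrite /is_PPF /is_PF /breakpoint; split.
  case=> -[Hb Hc] Hbr; split.
  - by move=> i; rewrite lez_nat; case/andP: (Hb i).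
  - by move=> k Hk; rewrite cE; apply: Hc.
  - move=> k /andP[k0 kn]; rewrite cE ltn_neqAle Hc ?k0 ?(ltnW kn) // andbT.
    apply/negP => /eqP Ek; have := Hbr k; rewrite k0 (ltnW kn) -Ek => /(_ (conj isT erefl)).
    by move=> E; rewrite E ltnn in kn.
case=> H1 H2 H3; split; first split.
- move=> j; rewrite -lez_nat H1 /=.
  have := cI_setT (H2 n _) j; rewrite n0 leqnn lez_nat; exact.
- by move=> k Hk; rewrite -cE; apply: H2.
move=> j [/andP[j0 jn] Ej]; apply/eqP; rewrite eqn_leq jn /=.
rewrite leqNgt; apply/negP => jlt; have := H3 j; rewrite j0 jlt cE Ej ltnn.
by move=> /(_ isT).
Qed.

End Tup.

Lemma PPFI_ext n (h1 h2 : 'I_n -> int) : h1 =1 h2 -> PPFI h1 -> PPFI h2.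
Proof. by move=> E; rewrite (functional_extensionality _ _ E). Qed.

Lemma in_PPF_K_I n (p : n.-tuple nat) : in_PPF_K p <-> PPFI (fun i => Posz (tnth p i)).
Proof.
rewrite /in_PPF_K prime_iff PPFV_I.
have E : (fun i => tup_fun p (lift ord0 i)) =1 (fun i => Posz (tnth p i)).
  by move=> i; rewrite /tup_fun liftK.
split; [exact: PPFI_ext | apply: PPFI_ext => i; by rewrite E].
Qed.

Lemma in_SR_K_I n (c : n.-tuple int) : 0 < n ->
  in_SR_K c <-> PPFI (fun i => n%:Z - tnth c i)%R.
Proof.
move=> n0; rewrite /in_SR_K srE // PPFV_I.
have E : (fun i => n%:Z - tupZ_fun c (lift ord0 i))%R =1 (fun i => n%:Z - tnth c i)%R.
  by move=> i; rewrite /tupZ_fun liftK.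
split; [exact: PPFI_ext | apply: PPFI_ext => i; by rewrite E].
Qed.

Definition tupx m (x : {ffun 'I_m.+2 -> 'I_m.+1}) : m.+2.-tuple nat :=
  [tuple (x i).+1 | i < m.+2].

Lemma cI_tupx m (x : {ffun 'I_m.+2 -> 'I_m.+1}) k :
  cI (fun i => Posz (tnth (tupx x) i)) k = C x k.
Proof.
rewrite /cI /C -sum1dep_card big_mkcond /=; apply: eq_bigr => i _.
by rewrite tnth_mktuple lez_nat; case: (x i < k).
Qed.

Lemma primeb_I m (x : {ffun 'I_m.+2 -> 'I_m.+1}) :
  primeb x <-> PPFI (fun i => Posz (tnth (tupx x) i)).
Proof.
split.
  move=> /forallP H; split.
  - by move=> i; rewrite tnth_mktuple lez_nat.
  - move=> k /andP[k0 kn]; rewrite cI_tupx.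
    case: (ltnP k m.+1) => Hk.
      by have := implyP (H (Ordinal Hk)) => /=; rewrite k0 => /(_ isT) /ltnW.
    by rewrite CN.
  - move=> k /andP[k0 kn]; rewrite cI_tupx.
    case: (ltnP k m.+1) => Hk.
      by have := implyP (H (Ordinal Hk)) => /=; rewrite k0 => /(_ isT).
    by rewrite CN.
case=> H1 H2 H3; apply/forallP => t; apply/implyP => t0.
have := H3 t; rewrite cI_tupx t0 /= ltnS ltnW //; exact.
Qed.

Lemma listB n : 0 < n -> exists l : seq (n.-tuple nat),
  [/\ uniq l, (forall p, p \in l <-> PPFI (fun i => Posz (tnth p i))) &
      size l = (n.-1) ^ (n.-1)].
Proof.
case: n => [//|[|m]] _.
  exists [:: [tuple 1]]; split => // p; rewrite inE; split.
    move=> /eqP ->; split.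
    - by move=> i; rewrite (ord1 i).
    - move=> k /andP[k0 k1]; have -> : k = 1 by apply/eqP; rewrite eqn_leq k1 k0.
      rewrite /cI (_ : [set i | _] = [set: 'I_1]) ?cardsT ?card_ord //.
      by apply/setP => i; rewrite !inE (ord1 i).
    - by move=> k; case: k => [|[|]].
  case=> H1 H2 H3; apply/eqP; apply: eq_from_tnth => i.
  rewrite (ord1 i) [RHS]/=; apply/eqP; rewrite eqn_leq.
  have := cI_setT (H2 1 isT) ord0; rewrite lez_nat => ->.
  by have := H1 ord0; rewrite lez_nat.
exists (map (@tupx m) (enum [set x | primeb x])); split.
- rewrite map_inj_uniq ?enum_uniq // => x y E; apply/ffunP => i; apply/val_inj.
  by have := congr1 (fun t => tnth t i) E; rewrite /= !tnth_mktuple => -[].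
- move=> p; split.
    case/mapP => x; rewrite mem_enum inE => /primeb_I Hx ->; done.
  case=> H1 H2 H3.
  have Hup : forall i, tnth p i <= m.+1.
    move=> i; have := cI_setT (H3 m.+1 _) i; rewrite lez_nat; apply.
    by rewrite ltnS leqnn.
  have Hlo : forall i, 0 < tnth p i by move=> i; have := H1 i; rewrite lez_nat.
  pose x : {ffun 'I_m.+2 -> 'I_m.+1} := [ffun i => inord (tnth p i).-1].
  have Ex : tupx x = p.
    apply: eq_from_tnth => i; rewrite tnth_mktuple ffunE inordK.
      by rewrite prednK.
    by have := Hup i; have := Hlo i; lia.
  apply/mapP; exists x => //; rewrite mem_enum inE; apply/primeb_I.
  by rewrite Ex; split.
- by rewrite size_map -cardE card_prime.
Qed.

Definition negt n (p : n.-tuple nat) : n.-tuple int :=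
  [tuple (n%:Z - (tnth p i)%:Z)%R | i < n].

Lemma listC n (l : seq (n.-tuple nat)) : 0 < n -> uniq l ->
  (forall p, p \in l <-> PPFI (fun i => Posz (tnth p i))) ->
  [/\ uniq (map (@negt n) l),
      (forall c, c \in map (@negt n) l <-> in_SR_K c) & size (map (@negt n) l) = size l].
Proof.
move=> n0 Hu Hl; split.
- rewrite map_inj_uniq // => x y E; apply: eq_from_tnth => i.
  have := congr1 (fun t => tnth t i) E; rewrite /= !tnth_mktuple => H.
  have : Posz (tnth x i) = Posz (tnth y i) by move: H; move: (tnth x i) (tnth y i) => a b; lia.
  by case.
- move=> c; rewrite in_SR_K_I //; split.
    case/mapP => p /Hl Hp ->; apply: PPFI_ext Hp => i.
    rewrite tnth_mktuple; move: (tnth p i) => a; lia.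
  move=> Hc; case: (Hc) => H1 _ _.
  pose p : n.-tuple nat := [tuple `|(n%:Z - tnth c i)%R|%N | i < n].
  have Ep : forall i, Posz (tnth p i) = (n%:Z - tnth c i)%R.
    move=> i; rewrite tnth_mktuple gez0_abs //.
    by apply: le_trans (H1 i).
  apply/mapP; exists p.
    apply/Hl; apply: PPFI_ext Hc => i; by rewrite Ep.
  apply: eq_from_tnth => i; rewrite tnth_mktuple Ep; move: (tnth c i) => a; lia.
- by rewrite size_map.
Qed.

Theorem proposition3p4 (n : nat) (hn : 0 < n) :
  (forall p : n.-tuple nat, is_PPF p <-> in_PPF_K p) /\
  (exists l : seq (n.-tuple nat),
      [/\ uniq l, (forall p, p \in l <-> in_PPF_K p) & size l = (n.-1) ^ (n.-1)]) /\
  (exists l : seq (n.-tuple int),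
      [/\ uniq l, (forall c, c \in l <-> in_SR_K c) & size l = (n.-1) ^ (n.-1)]).
Proof.
have [l [Hu Hl Hs]] := listB hn.
split.
  by move=> p; rewrite is_PPF_I // in_PPF_K_I.
split.
  by exists l; split => // p; rewrite in_PPF_K_I.
have [Hu' Hl' Hs'] := listC hn Hu Hl.
by exists (map (@negt n) l); split => //; rewrite Hs'.
Qed.
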